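(* Let $H$ be a set with a metric $d$ and $r\ge3$ an integer. Let $\mathcal{Q}$ be a partition of $[r]=\{1,\dots,r\}$ with $|\mathcal{Q}|\ge2$, fix $0\le\alpha<\beta$, and suppose $\underline h\in H^r$ satisfies $d^{\mathcal{Q}}(\underline h)\le\alpha$ and $d_{\mathcal{Q}}(\underline h)\le\beta$. Then there exists a partition $\mathcal{R}$ of $[r]$, strictly coarser than $\mathcal{Q}$, such that $d^{\mathcal{R}}(\underline h)<3\beta$.
   Context: For $\underline h=(h_1,\dots,h_r)\in H^r$ and $I,J\subset[r]$: $d^I(\underline h)=\max\{d(h_i,h_j):i,j\in I\}$, $d_{I,J}(\underline h)=\min\{d(h_i,h_j):i\in I,j\in J\}$. For a partition $\mathcal{Q}$: $d^{\mathcal{Q}}(\underline h)=\max_{I\in\mathcal{Q}}d^I(\underline h)$, $d_{\mathcal{Q}}(\underline h)=\min\{d_{I,J}(\underline h):I\ne J,\ I,J\in\mathcal{Q}\}$. A partition $\mathcal{R}$ is strictly coarser than $\mathcal{Q}$ if every block of $\mathcal{R}$ is a union of blocks of $\mathcal{Q}$ and $\mathcal{R}$ has fewer blocks than $\mathcal{Q}$. *)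

(* Defs.v *)
From HB Require Import structures.
From mathcomp Require Import all_boot all_order all_algebra.
From mathcomp Require Import reals constructive_ereal.
Set Implicit Arguments. Unset Strict Implicit. Unset Printing Implicit Defensive.
Import Order.TTheory GRing.Theory Num.Theory.
Local Open Scope ring_scope.

Definition is_metric (R : realType) (H : Type) (d : H -> H -> R) : Prop :=
  [/\ forall x y, d x y = 0 <-> x = y,
      forall x y, d x y = d y x &
      forall x y z, d x z <= d x y + d y z].

(* d^I(h) = max { d(h_i,h_j) : i,j in I }  (0 for empty I; distances are >= 0) *)
Definition diam (R : realType) (H : Type) (d : H -> H -> R) (r : nat)
  (h : 'I_r -> H) (I : {set 'I_r}) : R :=
  \big[Num.max/0]_(i in I) \big[Num.max/0]_(j in I) d (h i) (h j).

Definition sep (R : realType) (H : Type) (d : H -> H -> R) (r : nat)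
  (h : 'I_r -> H) (I J : {set 'I_r}) : \bar R :=
  \big[Order.min/+oo%E]_(i in I) \big[Order.min/+oo%E]_(j in J) ((d (h i) (h j))%:E).

Definition diamP (R : realType) (H : Type) (d : H -> H -> R) (r : nat)
  (h : 'I_r -> H) (Q : {set {set 'I_r}}) : R :=
  \big[Num.max/0]_(I in Q) diam d h I.

Definition sepP (R : realType) (H : Type) (d : H -> H -> R) (r : nat)
  (h : 'I_r -> H) (Q : {set {set 'I_r}}) : \bar R :=
  \big[Order.min/+oo%E]_(I in Q) \big[Order.min/+oo%E]_(J in Q | I != J) sep d h I J.

Definition strictly_coarser (r : nat) (Rp Q : {set {set 'I_r}}) : Prop :=
  (forall B, B \in Rp -> B = \bigcup_(A in Q | A \subset B) A) /\ (#|Rp| < #|Q|)%N.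

(* Main.v *)
Require Import Defs.
From HB Require Import structures.
From mathcomp Require Import all_boot all_order all_algebra.
From mathcomp Require Import reals constructive_ereal.
From mathcomp Require Import zify.
Import Order.TTheory GRing.Theory Num.Theory.
Local Open Scope ring_scope.

Lemma disjU (T : finType) (A B C : {set T}) :
  [disjoint A & C] -> [disjoint B & C] -> [disjoint A :|: B & C].
Proof. by rewrite -!setI_eq0 setIUl setU_eq0 => -> ->. Qed.

Theorem lemma10p1 (R : realType) (H : Type) (d : H -> H -> R)
  (hd : is_metric d) (r : nat) (hr : (3 <= r)%N)
  (Q : {set {set 'I_r}}) (hQ : partition Q [set: 'I_r]) (hQ2 : (2 <= #|Q|)%N)
  (alpha beta : R) (ha : 0 <= alpha) (hab : alpha < beta)
  (h : 'I_r -> H)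
  (h1 : diamP d h Q <= alpha) (h2 : (sepP d h Q <= beta%:E)%E) :
  exists Rp : {set {set 'I_r}},
    [/\ partition Rp [set: 'I_r], strictly_coarser Rp Q & diamP d h Rp < 3 * beta].
Proof.
case: hd => _ dsym dtri.
have hdiam : forall I, I \in Q -> forall x y, x \in I -> y \in I -> d (h x) (h y) <= alpha.
  move=> I IQ x y xI yI; apply: le_trans h1.
  apply: (le_trans _ (le_bigmax_cond _ _ IQ)).
  apply: (le_trans _ (le_bigmax_cond _ _ xI)).
  exact: (le_bigmax_cond _ _ yI).
have [I [J [IQ JQ IJ [i [j [iI jJ dij]]]]]] : exists I J, [/\ I \in Q, J \in Q, I != J &
    exists i j, [/\ i \in I, j \in J & d (h i) (h j) <= beta]].
  case: (boolP [exists I in Q, exists J in Q, (I != J) && [exists i in I, exists j in J, d (h i) (h j) <= beta]]).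
    move=> /existsP[I /andP[IQ /existsP[J /andP[JQ /andP[IJ /existsP[i /andP[iI /existsP[j /andP[jJ dl]]]]]]]]].
    by exists I, J; split => //; exists i, j.
  move=> /negP hn; exfalso; move: h2; apply/negP; rewrite -ltNge.
  apply/bigmin_gtP; split; [exact: ltry|] => I IQ; apply/bigmin_gtP; split; [exact: ltry|] => J /andP[JQ IJ].
  apply/bigmin_gtP; split; [exact: ltry|] => x xI; apply/bigmin_gtP; split; [exact: ltry|] => y yJ.
  rewrite lte_fin ltNge; apply/negP => dl; apply: hn.
  apply/existsP; exists I; rewrite IQ; apply/existsP; exists J; rewrite JQ IJ /=.
  apply/existsP; exists x; rewrite xI; apply/existsP; exists y; by rewrite yJ.
set Rp := (I :|: J) |: (Q :\: [set I; J]).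
case/and3P: hQ => /eqP covQ trivQ nQ0.
exists Rp; split.
- have IJQ : forall A, A \in Q -> A != I -> A != J -> [disjoint I :|: J & A].
    move=> A AQ AI AJ; apply: disjU.
      by apply: (trivIsetP trivQ) => //; rewrite eq_sym.
    by apply: (trivIsetP trivQ) => //; rewrite eq_sym.
  apply/and3P; split.
  + apply/eqP/setP => x; rewrite inE; apply/bigcupP.
    have : x \in cover Q by rewrite covQ inE.
    move/bigcupP=> [A AQ xA].
    case: (boolP ((A == I) || (A == J))) => [/orP[/eqP EA|/eqP EA]|].
    * by exists (I :|: J); rewrite !inE ?eqxx //; rewrite -EA xA.
    * by exists (I :|: J); rewrite !inE ?eqxx //; rewrite -EA xA orbT.
    * by rewrite negb_or => hA; exists A => //; rewrite !inE AQ; move: hA => /andP[AI AJ]; rewrite (negbTE AI) (negbTE AJ) orbT.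
  + apply/trivIsetP => A B; rewrite !inE => /orP[/eqP -> | /andP[AIJ AQ]] /orP[/eqP -> | /andP[BIJ BQ]].
    * by rewrite eqxx.
    * by move=> _; apply: IJQ => //; move: BIJ; rewrite negb_or => /andP[].
    * move=> _; rewrite disjoint_sym; apply: IJQ => //; move: AIJ; rewrite negb_or => /andP[] //.
    * exact: (trivIsetP trivQ).
  + rewrite !inE negb_or eq_sym setU_eq0; apply/andP; split.
      by apply/nandP; left; apply/negP => /eqP I0; move: nQ0; rewrite -I0 IQ.
    by apply/nandP; right; apply/negP => S0; move: nQ0; rewrite S0.
- split.
  + move=> B; rewrite !inE => /orP[/eqP -> | /andP[BIJ BQ]].
    * apply/setP => x; apply/idP/idP.
        rewrite inE => /orP[xI|xJ]; apply/bigcupP.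
          by exists I => //; rewrite IQ subsetUl.
        by exists J => //; rewrite JQ subsetUr.
      by move=> /bigcupP[A /andP[_ /subsetP]]; apply.
    * apply/setP => x; apply/idP/idP.
        by move=> xB; apply/bigcupP; exists B => //; rewrite BQ subxx.
      by move=> /bigcupP[A /andP[_ /subsetP]]; apply.
  + rewrite /Rp.
    have e2 : Q :&: [set I; J] = [set I; J].
      by apply/setIidPr; apply/subsetP => x; rewrite !inE => /orP[]/eqP->.
    rewrite cardsU1 cardsD e2 cards2 IJ.
    have := leq_b1 (I :|: J \notin Q :\: [set I; J]); move: hQ2; clear; lia.
- rewrite /diamP; apply/bigmax_ltP; split; first by rewrite mulr_gt0 // (le_lt_trans ha hab).
  have b0 : 0 < beta by rewrite (le_lt_trans ha hab).
  move=> B; rewrite !inE => /orP[/eqP -> | /andP[BIJ BQ]].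
  + rewrite /diam; apply/bigmax_ltP; split; first by rewrite mulr_gt0.
    move=> x xIJ; apply/bigmax_ltP; split; first by rewrite mulr_gt0.
    have key : forall x y, x \in I -> y \in J -> d (h x) (h y) < 3 * beta.
      move=> x' y' xI yJ.
      apply: (le_lt_trans (dtri _ (h i) _)).
      apply: (le_lt_trans (lerD (hdiam _ IQ _ _ xI iI) (dtri _ (h j) _))).
      apply: (le_lt_trans (lerD (lexx _) (lerD dij (hdiam _ JQ _ _ jJ yJ)))).
      have : alpha + (beta + alpha) < beta + (beta + beta) by rewrite ltrD // ltrD2l.
      by move/lt_le_trans; apply; rewrite le_eqVlt; apply/orP; left; apply/eqP; rewrite mulr_natl mulrSr mulr2n addrA.
    move=> y; move: xIJ; rewrite !inE => /orP[xI|xJ] /orP[yI|yJ].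
    * by apply: le_lt_trans (hdiam _ IQ _ _ xI yI) _; rewrite (lt_trans hab) // ltr_pMl // ltr1n.
    * exact: key.
    * by rewrite dsym; exact: key.
    * by apply: le_lt_trans (hdiam _ JQ _ _ xJ yJ) _; rewrite (lt_trans hab) // ltr_pMl // ltr1n.
  + rewrite /diam; apply/bigmax_ltP; split; first by rewrite mulr_gt0.
    move=> x xB; apply/bigmax_ltP; split; first by rewrite mulr_gt0.
    move=> y yB.
    by apply: le_lt_trans (hdiam _ BQ _ _ xB yB) _; rewrite (lt_trans hab) // ltr_pMl // ltr1n.
Qed.
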